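(* If $n\ge 3t+1$, then the protocol COOL (core protocol run by all $n$ processors, as described in the context) satisfies termination, consistency and validity in every execution, i.e. it is an error-free Byzantine agreement protocol.
   Context: Setting. $n$ processors indexed by $[1:n]$, pairwise joined by reliable private synchronous channels; recipients know senders. At most $t$ processors are dishonest, controlled by a Byzantine adversary of unbounded computational power knowing all inputs, who may make them deviate arbitrarily (missing values are replaced by a fixed default); the others are honest. Processor $i$ holds an $\ell$-bit initial message $\boldsymbol w_i$. $\phi$ is a default value different from every $\ell$-bit message. Logarithms are base 2. Requirements: termination (every honest processor eventually outputs and terminates), consistency (all honest outputs equal), validity (if all honest processors have the same initial message, they output it). Code. $k=\lfloor t/5\rfloor+1$, $c=\lceil \max\{\ell,(t/5+1)\log(n+1)\}/k\rceil$. Messages are zero-padded to $kc$ bits and viewed in $GF(2^c)^k$. Integers in $[1:n]$ are identified with distinct nonzero elements of $GF(2^c)$; $\boldsymbol h_i\in GF(2^c)^k$ has entries $h_{i,j}=\prod_{p\in[1:k],\,p\ne j}\frac{i-p}{j-p}$ (field arithmetic). COOL (honest processor $i$). Initialization: updated message $\boldsymbol w^{(i)}:=\boldsymbol w_i$, $y^{(i)}_j:=\boldsymbol h_j^{\mathsf T}\boldsymbol w_i$ for $j\in[1:n]$, $u_i(i):=1$. Phase 1. (a) Send $(y^{(i)}_j,y^{(i)}_i)$ to each $j\ne i$. (b) For $j\ne i$, link indicator $u_i(j):=1$ if the pair received from $j$ equals $(y^{(i)}_i,y^{(i)}_j)$, else $0$. Success indicator $s_i:=1$ if $\sum_{j=1}^n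 u_i(j)\ge n-t$; otherwise $s_i:=0$ and $\boldsymbol w^{(i)}:=\phi$. (c) Send $s_i$ to all; each processor records the indicator received from each $j$ (own for itself) and forms $\mathcal S_1=\{j:s_j=1\}$, $\mathcal S_0=\{j:s_j=0\}$ (views may differ). Phase 2. If $s_i=1$: set $u_i(j):=0$ for all $j\in\mathcal S_0$; if now $\sum_j u_i(j)<n-t$, set $s_i:=0$, $\boldsymbol w^{(i)}:=\phi$, and send $s_i=0$ to all. Everyone overwrites recorded indicators with newly received ones and recomputes $\mathcal S_0,\mathcal S_1$. Phase 3. Repeat Phase 2 once more. Vote $v_i:=1$ if the recorded indicators satisfy $\sum_j s_j\ge 2t+1$, else $0$. Run on the votes a deterministic error-free binary Byzantine agreement protocol for $t<n/3$ (e.g. Berman–Garay–Perry or Coan–Welch), which guarantees all honest processors decide, decide equally, and decide the common honest vote when all honest votes agree. If the decision is $0$: set $\boldsymbol w^{(i)}:=\phi$, output $\phi$, stop. Phase 4 (decision 1). If $s_i=0$: replace $y^{(i)}_i$ by the most frequent value (fixed tie-breaking) among the first components of the Phase-1 pairs received from $j\in\mathcal S_1$; send it to each $j\in\mathcal S_0\setminus\{i\}$; with $z_i=y^{(i)}_i$, $z_j$ = value received from $j$ in Phase 4 for $j\in\mathcal S_0\setminus\{i\}$, $z_j$ = second component of the Phase-1 pair from $j$ for $j\in\mathcal S_1$, set $\boldsymbol w^{(i)}$ to a message $\boldsymbol x$ with $\boldsymbol h_j^{\mathsf T}\boldsymbol x=z_j$ for at least $n-t$ indices $j$ ($\phi$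 if none). If $s_i=1$ keep $\boldsymbol w^{(i)}$. Output $\boldsymbol w^{(i)}$ and stop. *)

(* Defs.v *)
(* Processors are indexed by 'I_n
   (0-based: processor i : 'I_n is the paper's processor i+1). *)
From HB Require Import structures.
From mathcomp Require Import all_boot all_algebra.
Import GRing.Theory.

Definition cool_k (t : nat) : nat := (t %/ 5).+1.

(* c = ceil( max{l, (t/5+1) log2(n+1)} / k ), with t/5 real division.
   Equivalently c is the least natural number with
     l <= c*k   and   (t/5+1) log2(n+1) <= c*k,
   and the second condition is equivalent (multiply by 5, exponentiate
   base 2) to (n+1)^(t+5) <= 2^(5ck). *)
Definition cool_c_ok (n t l c : nat) : bool :=
  (l <= c * cool_k t) && ((n.+1) ^ (t + 5) <= 2 ^ (5 * c * cool_k t)).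
Definition is_cool_c (n t l c : nat) : Prop :=
  cool_c_ok n t l c /\ forall c', cool_c_ok n t l c' -> c <= c'.

(* The adversary: all messages sent by dishonest processors.
   Phase 1a pairs, Phase 1c indicators, Phase 2 and Phase 3 indicator
   updates (None = nothing sent), Phase 4 values.  Argument order:
   sender, then receiver.  (Missing values replaced by a fixed default
   are just particular choices.) *)
Record adversary (F : Type) (n : nat) := Adversary {
  adv1  : 'I_n -> 'I_n -> F * F;
  adv1s : 'I_n -> 'I_n -> bool;
  adv2  : 'I_n -> 'I_n -> option bool;
  adv3  : 'I_n -> 'I_n -> option bool;
  adv4  : 'I_n -> 'I_n -> F
}.

Section COOL.
Context (F : finFieldType) (n t l c : nat).
(* identification of the integers with distinct nonzero field elements;
   integer p (0-based) is alpha p *)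
Context (alpha : nat -> F).
(* identification of c-bit strings with GF(2^c) *)
Context (toF : {ffun 'I_c -> bool} -> F).

Local Notation k := (cool_k t).
Local Notation vec := {ffun 'I_(cool_k t) -> F}.

Definition cool_h (i : 'I_n) (j : 'I_k) : F :=
  (\prod_(p < k | p != j) ((alpha i - alpha p) / (alpha j - alpha p)))%R.

Definition cool_code (x : vec) (i : 'I_n) : F :=
  (\sum_(q < k) cool_h i q * x q)%R.

(* an l-bit message zero-padded to kc bits and cut into k blocks of c bits *)
Definition cool_enc (w : l.-tuple bool) : vec :=
  [ffun q : 'I_k => toF [ffun b : 'I_c => nth false w (q * c + b)]].

(* Specification of the Phase-4 decoding step: returns some x agreeing with
   z on at least n-t indices, or phi (= None) if there is none. *)
Definition cool_dec_spec (dec : ('I_n -> F) -> option vec) : Prop :=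
  forall z : 'I_n -> F,
    match dec z return Prop with
    | Some x => (n - t <= #|[set j | cool_code x j == z j]|)%N
    | None => forall x : vec, (#|[set j | cool_code x j == z j]| < n - t)%N
    end.

(* most frequent value of a sequence, fixed tie-breaking *)
Definition cool_mode (s : seq F) : F :=
  [arg max_(y > (0%R : F)) count (pred1 y) s].

Context (dec : ('I_n -> F) -> option vec).
Context (H : {set 'I_n}) (w : 'I_n -> l.-tuple bool) (A : adversary F n).

Definition cnt (u : 'I_n -> bool) : nat := #|[set j | u j]|.

Definition y (i j : 'I_n) : F := cool_code (cool_enc (w i)) j.

Definition m1 (j i : 'I_n) : F * F :=
  if j \in H then (y j i, y j j) else @adv1 F n A j i.
Definition u1 (i j : 'I_n) : bool := (j == i) || (m1 j i == (y i i, y i j)).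
Definition s1 (i : 'I_n) : bool := n - t <= cnt (u1 i).
Definition rec1 (i j : 'I_n) : bool := if j \in H then s1 j else @adv1s F n A j i.

Definition u2 (i j : 'I_n) : bool := u1 i j && rec1 i j.
Definition s2 (i : 'I_n) : bool := s1 i && (n - t <= cnt (u2 i)).
Definition m2 (j i : 'I_n) : option bool :=
  if j \in H then (if s1 j && ~~ s2 j then Some false else None) else @adv2 F n A j i.
Definition rec2 (i j : 'I_n) : bool :=
  if m2 j i is Some b then b else rec1 i j.

Definition u3 (i j : 'I_n) : bool := u2 i j && rec2 i j.
Definition s3 (i : 'I_n) : bool := s2 i && (n - t <= cnt (u3 i)).
Definition m3 (j i : 'I_n) : option bool :=
  if j \in H then (if s2 j && ~~ s3 j then Some false else None) else @adv3 F n A j i.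
Definition rec3 (i j : 'I_n) : bool :=
  if m3 j i is Some b then b else rec2 i j.
Definition vote (i : 'I_n) : bool := 2 * t + 1 <= cnt (rec3 i).

Definition maj (i : 'I_n) : F :=
  cool_mode [seq (m1 j i).1 | j <- enum 'I_n & rec3 i j].
(* value received by i from j in Phase 4 (default 0 if nothing sent) *)
Definition m4 (j i : 'I_n) : F :=
  if j \in H then
    (if ~~ s3 j && ~~ rec3 j i && (i != j) then maj j else 0%R)
  else @adv4 F n A j i.
Definition z (i j : 'I_n) : F :=
  if j == i then maj i else if rec3 i j then (m1 j i).2 else m4 j i.

(* output of processor i, given the common decision d of the binary BA
   run on the votes; None stands for phi *)
Definition cool_out (d : bool) (i : 'I_n) : option vec :=
  if ~~ d then None else if s3 i then Some (cool_enc (w i)) else dec (z i).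

End COOL.

(* Main.v *)
Require Import Defs.
From mathcomp Require Import all_boot all_algebra.
From mathcomp Require Import zify ring.
Set Implicit Arguments. Unset Strict Implicit. Unset Printing Implicit Defensive.
Import GRing.Theory.

Section Alg.
Variables (n t : nat) (F : finFieldType) (alpha : nat -> F).
Hypothesis Hkn : cool_k t <= n.
Hypothesis Halpha_inj : {in [pred i | i < n] &, injective alpha}.
Local Notation k := (cool_k t).
Local Notation code := (cool_code F n t alpha).

Definition iq (q : 'I_k) : 'I_n := widen_ord Hkn q.

Lemma alpha_neq (p q : nat) : p < n -> q < n -> p != q -> alpha p != alpha q.
Proof.
move=> hp hq; apply: contra => /eqP e; apply/eqP; exact: Halpha_inj.
Qed.

Lemma code_at (x : {ffun 'I_k -> F}) (q : 'I_k) : code x (iq q) = x q.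
Proof.
rewrite /cool_code (bigD1 q) //= big1 ?addr0.
  rewrite /cool_h big1 ?mul1r // => p hp.
  have hq := leq_trans (ltn_ord q) Hkn.
  have hp' := leq_trans (ltn_ord p) Hkn.
  rewrite divff // subr_eq0 alpha_neq // eq_sym //.
move=> q' hq'; rewrite /cool_h (bigD1 q) /=; last by rewrite eq_sym.
by rewrite subrr !mul0r.
Qed.

Definition Lpoly (q : 'I_k) : {poly F} := (\prod_(p < k | p != q) ('X - (alpha p)%:P))%R.
Definition Dq (q : 'I_k) : F := (\prod_(p < k | p != q) (alpha q - alpha p))%R.
Definition Ppoly (x : {ffun 'I_k -> F}) : {poly F} :=
  (\sum_(q < k) (x q / Dq q) *: Lpoly q)%R.

Lemma size_Lpoly q : size (Lpoly q) <= k.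
Proof.
rewrite /Lpoly size_prod; last by move=> i _; rewrite polyXsubC_eq0.
under eq_bigr do rewrite size_XsubC.
rewrite sum_nat_const.
set m := #|_|.
have : m = k.-1 by rewrite -(card_ord k) -(cardC1 q); apply: eq_card.
rewrite [(2%R : nat)]/=. 
rewrite /cool_k /=; lia.
Qed.

Lemma size_Ppoly x : size (Ppoly x) <= k.
Proof.
apply: leq_trans (size_sum _ _ _) _.
apply/bigmax_leqP => q _.
exact: leq_trans (size_scale_leq _ _) (size_Lpoly q).
Qed.

Lemma Ppoly_eval x (i : 'I_n) : ((Ppoly x).[alpha i])%R = code x i.
Proof.
rewrite /Ppoly horner_sum /cool_code; apply: eq_bigr => q _.
rewrite hornerZ /Lpoly horner_prod /cool_h prodf_div /Dq.
under eq_bigr do rewrite hornerXsubC.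
by ring.
Qed.

Lemma mds (x x' : {ffun 'I_k -> F}) (S : {set 'I_n}) :
  k <= #|S| -> (forall p, p \in S -> code x p = code x' p) -> x = x'.
Proof.
move=> hS hagree.
have hP : (Ppoly x - Ppoly x' = 0)%R.
  apply/eqP; apply: contraT => hne.
  have hsz : size (Ppoly x - Ppoly x')%R <= k.
    apply: leq_trans (size_polyD _ _) _.
    by rewrite size_polyN geq_max !size_Ppoly.
  have hu : uniq [seq alpha (val p) | p <- enum S].
    rewrite map_inj_in_uniq ?enum_uniq // => p1 p2 _ _ e.
    apply: val_inj; apply: Halpha_inj => //; rewrite inE ltn_ord //.
  have hr : all (root (Ppoly x - Ppoly x')%R) [seq alpha (val p) | p <- enum S].
    apply/allP => a /mapP [p hp ->]; rewrite mem_enum in hp.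
    by rewrite /root hornerD hornerN !Ppoly_eval hagree // subrr.
  have := max_poly_roots hne hr hu.
  rewrite size_map -cardE => h; by move: (leq_trans (leq_trans h hsz) hS); rewrite ltnn.
apply/ffunP => q.
move/eqP: hP; rewrite subr_eq0 => /eqP hP.
by rewrite -!code_at -!Ppoly_eval hP.
Qed.

End Alg.

Section Proto.
Variables (n t l c : nat) (F : finFieldType) (alpha : nat -> F)
  (toF : {ffun 'I_c -> bool} -> F)
  (dec : ('I_n -> F) -> option {ffun 'I_(cool_k t) -> F}).
Hypothesis Hnt : 3 * t + 1 <= n.
Hypothesis Halpha_inj : {in [pred i | i < n] &, injective alpha}.
Hypothesis Hdec : cool_dec_spec F n t alpha dec.
Variables (H : {set 'I_n}) (w : 'I_n -> l.-tuple bool) (A : adversary F n).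
Hypothesis HH : #|~: H| <= t.

Local Notation k := (cool_k t).
Local Notation code := (cool_code F n t alpha).
Local Notation e i := (cool_enc F t l c toF (w i)).
Local Notation C i := (code (e i)).
Local Notation s1 := (s1 F n t l c alpha toF H w A).
Local Notation s2 := (s2 F n t l c alpha toF H w A).
Local Notation s3 := (s3 F n t l c alpha toF H w A).
Local Notation u1 := (u1 F n t l c alpha toF H w A).
Local Notation u2 := (u2 F n t l c alpha toF H w A).
Local Notation u3 := (u3 F n t l c alpha toF H w A).
Local Notation rec1 := (rec1 F n t l c alpha toF H w A).
Local Notation rec2 := (rec2 F n t l c alpha toF H w A).
Local Notation rec3 := (rec3 F n t l c alpha toF H w A).
Local Notation m1 := (m1 F n t l c alpha toF H w A).
Local Notation maj := (maj F n t l c alpha toF H w A).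
Local Notation z := (z F n t l c alpha toF H w A).
Local Notation vote := (vote F n t l c alpha toF H w A).
Local Notation cnt := (cnt n).
Local Notation f := #|~: H|.

Lemma Hkn : k <= n.
Proof. have := leq_div t 5; rewrite /cool_k; lia. Qed.

Lemma kbound : 5 * (k.-1) <= t.
Proof. have := leq_trunc_div t 5; rewrite /cool_k /=; lia. Qed.

Lemma cardH : #|H| + f = n.
Proof. by rewrite cardsC card_ord. Qed.

Lemma cnt_split (u : pred 'I_n) : cnt u <= #|[set j in H | u j]| + f.
Proof.
rewrite /cnt -(cardsID H [set j | u j]) leq_add //.
  by apply: subset_leq_card; apply/subsetP => j; rewrite !inE andbC.
by apply: subset_leq_card; apply/subsetP => j; rewrite !inE => /andP [].
Qed.

Lemma cnt_ge (u : pred 'I_n) : (forall j, j \in H -> u j) -> #|H| <= cnt u.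
Proof.
move=> hu; rewrite /cnt; apply: subset_leq_card; apply/subsetP => j hj.
by rewrite inE hu.
Qed.

Lemma s2_s1 i : s2 i -> s1 i.
Proof. by rewrite /s2 => /andP []. Qed.
Lemma s3_s2 i : s3 i -> s2 i.
Proof. by rewrite /s3 => /andP []. Qed.

Lemma rec1_H i j : j \in H -> rec1 i j = s1 j.
Proof. by rewrite /Defs.rec1 => ->. Qed.
Lemma rec2_H i j : j \in H -> rec2 i j = s2 j.
Proof.
move=> hj; rewrite /Defs.rec2 /m2 hj rec1_H //.
case: (boolP (Defs.s2 _ _ _ _ _ _ _ _ _ _ j)) => h2.
  by rewrite s2_s1 //.
by case: (Defs.s1 _ _ _ _ _ _ _ _ _ _ j).
Qed.
Lemma rec3_H i j : j \in H -> rec3 i j = s3 j.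
Proof.
move=> hj; rewrite /Defs.rec3 /m3 hj rec2_H //.
case: (boolP (Defs.s3 _ _ _ _ _ _ _ _ _ _ j)) => h3.
  by rewrite s3_s2 //.
by case: (Defs.s2 _ _ _ _ _ _ _ _ _ _ j).
Qed.
Lemma m1_H i j : j \in H -> m1 j i = (C j i, C j j).
Proof. by rewrite /Defs.m1 => ->. Qed.

Definition Aset (v : 'I_n -> F) := [set p in H | v p == C p p].

Lemma u1_A i j : i \in H -> j \in H -> u1 i j ->
  j \in Aset (C i) /\ i \in Aset (C j).
Proof.
move=> hi hj; rewrite /Defs.u1 m1_H //.
case/orP => [/eqP -> | /eqP [h1 h2]]; first by rewrite !inE hi eqxx.
by rewrite !inE hi hj h1 h2 !eqxx.
Qed.

Lemma u1_same i j : j \in H -> e i = e j -> u1 i j.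
Proof.
move=> hj he; rewrite /Defs.u1 m1_H // /y he.
by rewrite eqxx orbT.
Qed.

Lemma A_self j : j \in H -> j \in Aset (C j).
Proof. by move=> hj; rewrite !inE hj eqxx. Qed.

Lemma inter_small i j : e i != e j -> #|Aset (C i) :&: Aset (C j)| <= k.-1.
Proof.
move=> hne; rewrite leqNgt; apply/negP => hlt.
have hk : k <= #|Aset (C i) :&: Aset (C j)| by move: hlt; rewrite /cool_k /=.
move/negP: hne; apply; apply/eqP.
apply: (mds Hkn Halpha_inj hk) => p; rewrite !inE => /andP [/andP [_ /eqP ->]].
by move=> /andP [_ /eqP ->].
Qed.

Lemma s1_A i : i \in H -> s1 i -> n - t <= #|Aset (C i)| + f.
Proof.
move=> hi hs; apply: leq_trans hs _; apply: leq_trans (cnt_split _) _.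
rewrite leq_add2r; apply: subset_leq_card; apply/subsetP => j.
by rewrite inE => /andP [hj /(u1_A hi hj) []].
Qed.

Lemma three (X Y Z : {set 'I_n}) : X \subset H -> Y \subset H -> Z \subset H ->
  #|X| + #|Y| + #|Z| <= #|H| + #|X :&: Y| + #|X :&: Z| + #|Y :&: Z|.
Proof.
move=> hX hY hZ.
have e1 := cardsUI X Y.
have e2 := cardsUI (X :|: Y) Z.
have h3 : #|(X :|: Y) :&: Z| <= #|X :&: Z| + #|Y :&: Z|.
  rewrite setIUl; have := cardsUI (X :&: Z) (Y :&: Z); lia.
have h4 : #|(X :|: Y) :|: Z| <= #|H|.
  by apply: subset_leq_card; rewrite !subUset hX hY hZ.
lia.
Qed.

Lemma two_groups i i' j : i \in H -> i' \in H -> s1 i -> s1 i' -> e i != e i' ->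
  j \in H -> s1 j -> e j = e i \/ e j = e i'.
Proof.
move=> hi hi' s1i s1i' hne hj s1j.
case: (eqVneq (e j) (e i)) => [-> | h1]; first by left.
case: (eqVneq (e j) (e i')) => [-> | h2]; first by right.
exfalso.
have := three (X := Aset (C i)) (Y := Aset (C i')) (Z := Aset (C j)).
have sub : forall v, Aset v \subset H by move=> v; apply/subsetP => p; rewrite inE => /andP [].
move=> /(_ (sub _) (sub _) (sub _)).
have := inter_small hne; have := inter_small (i := i) (j := j); rewrite eq_sym => /(_ h1).
have := inter_small (i := i') (j := j); rewrite eq_sym => /(_ h2).
have := s1_A hi s1i; have := s1_A hi' s1i'; have := s1_A hj s1j.
have := cardH; have := kbound.
lia.
Qed.

Definition G i := [set j in H | e j == e i].

Lemma G_A i : G i \subset Aset (C i).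
Proof.
by apply/subsetP => j; rewrite !inE => /andP [hj /eqP ->]; rewrite hj eqxx.
Qed.

Lemma one_side i i' : i \in H -> i' \in H -> s3 i -> e i != e i' ->
  (forall j, j \in H -> s1 j -> e j = e i \/ e j = e i') ->
  n - t <= #|G i| + f.
Proof.
move=> hi hi' s3i hne two.
pose S2 := [set j | s2 j].
have ha : n - t <= #|G i :&: S2| + k.-1 + f.
  have := s3i; rewrite /Defs.s3 => /andP [_ hc].
  apply: leq_trans hc _; apply: leq_trans (cnt_split _) _.
  rewrite leq_add2r.
  apply: leq_trans (_ : #|(G i :&: S2) :|: (Aset (C i) :&: Aset (C i'))| <= _).
    apply: subset_leq_card; apply/subsetP => j; rewrite inE => /andP [hj].
    rewrite /Defs.u3 /Defs.u2 => /andP [/andP [hu1 hr1] hr2].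
    rewrite rec1_H // in hr1; rewrite rec2_H // in hr2.
    case: (two j hj hr1) => hej.
      by rewrite !inE hj hej eqxx hr2.
    have [hA _] := u1_A hi hj hu1.
    have hB : j \in Aset (C i') by rewrite -hej A_self.
    by rewrite in_setU !in_setI hA hB orbT.
  have := cardsUI (G i :&: S2) (Aset (C i) :&: Aset (C i')).
  have := inter_small hne; lia.
have [j hj hjA] : exists2 j, j \in G i :&: S2 & j \notin Aset (C i').
  apply/subsetPn; apply/negP => hsub.
  have : G i :&: S2 \subset Aset (C i) :&: Aset (C i').
    rewrite subsetI hsub andbT; apply: subset_trans (G_A i).
    exact: subsetIl.
  move/subset_leq_card; have := inter_small hne.
  have := kbound; have := HH; move: ha Hnt; lia.
move: hj; rewrite !inE => /andP [/andP [hj /eqP hej] s2j].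
have := s2j; rewrite /Defs.s2 => /andP [_ hc].
apply: leq_trans hc _; apply: leq_trans (cnt_split _) _.
rewrite leq_add2r; apply: subset_leq_card; apply/subsetP => p.
rewrite inE => /andP [hp]; rewrite /Defs.u2 => /andP [hu1 hr1].
rewrite rec1_H // in hr1.
case: (two p hp hr1) => hep; first by rewrite inE hp hep eqxx.
have [_ hjA'] := u1_A hj hp hu1.
by move: hjA; rewrite -hep hjA'.
Qed.

Lemma main i i' : i \in H -> i' \in H -> s3 i -> s3 i' -> e i = e i'.
Proof.
move=> hi hi' s3i s3i'; apply/eqP; apply: contraT => hne.
have s1i := s2_s1 (s3_s2 s3i); have s1i' := s2_s1 (s3_s2 s3i').
have h1 := one_side hi hi' s3i hne (fun j hj s1j => two_groups hi hi' s1i s1i' hne hj s1j).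
have hne' : e i' != e i by rewrite eq_sym.
have h2 := one_side hi' hi s3i' hne'
  (fun j hj s1j => match two_groups hi hi' s1i s1i' hne hj s1j with
                   | or_introl a => or_intror a | or_intror b => or_introl b end).
have hdis : #|G i| + #|G i'| <= #|H|.
  have := cardsUI (G i) (G i').
  have -> : G i :&: G i' = set0.
    apply/setP => j; rewrite !inE.
    case: (j \in H) => //=; apply/negP => /andP [/eqP -> /eqP]; exact/eqP.
  rewrite cards0 addn0 => <-.
  by apply: subset_leq_card; rewrite subUset; apply/andP; split;
    apply/subsetP => j; rewrite inE => /andP [].
have := cardH; move: HH Hnt; lia.
Qed.


Lemma count_set (g : 'I_n -> F) (P : pred 'I_n) (v : F) :
  count_mem v [seq g j | j <- enum 'I_n & P j] = #|[set j | P j && (g j == v)]|.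
Proof.
rewrite count_map count_filter cardsE cardE -size_filter /enum_mem -filter_predI; congr size; apply: eq_filter => j /=; rewrite !inE andbT -topredE /=; case: (P j) => //=; by rewrite ?andbT ?andbF.
Qed.

Lemma maj_ok j vv : j \in H ->
  (forall p, p \in H -> s3 p -> C p j = vv) ->
  f < #|[set p in H | s3 p]| -> maj j = vv.
Proof.
move=> hj hv hcard.
rewrite /Defs.maj /cool_mode.
case: arg_maxnP => // y _ hmax.
have := hmax vv isT; rewrite !count_set => hle.
apply/eqP; apply: contraT => hne.
have h1 : #|[set p in H | s3 p]| <= #|[set p | rec3 j p && ((m1 p j).1 == vv)]|.
  apply: subset_leq_card; apply/subsetP => p; rewrite !inE => /andP [hp s3p].
  by rewrite rec3_H // s3p m1_H //= hv // eqxx.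
have h2 : #|[set p | rec3 j p && ((m1 p j).1 == y)]| <= f.
  apply: subset_leq_card; apply/subsetP => p; rewrite !inE.
  case: (boolP (p \in H)) => // hp /andP [].
  rewrite rec3_H // m1_H //= => s3p /eqP hy.
  by move: hne; rewrite -hy hv // eqxx.
move: hle h1 h2 hcard; lia.
Qed.

Lemma validity w0 d :
  (forall b : bool, (forall i, i \in H -> vote i = b) -> d = b) ->
  (forall i, i \in H -> w i = w0) ->
  forall i, i \in H ->
    cool_out F n t l c alpha toF dec H w A d i = Some (cool_enc F t l c toF w0).
Proof.
move=> HBA hw.
have hH : n - t <= #|H| by have := cardH; move: HH; lia.
have hs1 : forall i, i \in H -> s1 i.
  move=> i hi; apply: leq_trans hH _; apply: cnt_ge => j hj.
  by apply: u1_same => //; rewrite hw // hw.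
have hs2 : forall i, i \in H -> s2 i.
  move=> i hi; rewrite /Defs.s2 hs1 //=; apply: leq_trans hH _; apply: cnt_ge => j hj.
  rewrite /Defs.u2 rec1_H // hs1 // andbT.
  by apply: u1_same => //; rewrite hw // hw.
have hs3 : forall i, i \in H -> s3 i.
  move=> i hi; rewrite /Defs.s3 hs2 //=; apply: leq_trans hH _; apply: cnt_ge => j hj.
  rewrite /Defs.u3 /Defs.u2 rec1_H // rec2_H // hs1 // hs2 // !andbT.
  by apply: u1_same => //; rewrite hw // hw.
have hd : d = true.
  apply: HBA => i hi; rewrite /Defs.vote.
  apply/idP; apply: leq_trans (_ : #|H| <= _); last first.
    by apply: cnt_ge => j hj; rewrite rec3_H // hs3.
  have := cardH; move: HH Hnt; lia.
move=> i hi; rewrite /cool_out hd /= hs3 // hw //.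
Qed.

Lemma consistency d :
  (forall b : bool, (forall i, i \in H -> vote i = b) -> d = b) ->
  forall i j, i \in H -> j \in H ->
    cool_out F n t l c alpha toF dec H w A d i = cool_out F n t l c alpha toF dec H w A d j.
Proof.
move=> HBA.
case: d HBA => HBA; last by move=> i j _ _; rewrite /cool_out.
have [i0 hi0 hv0] : exists2 i0, i0 \in H & vote i0.
  case: (boolP [exists i0, (i0 \in H) && vote i0]).
    by case/existsP => i0 /andP [h1 h2]; exists i0.
  move/existsPn => hn.
  suff : true = false by [].
  apply: HBA => i hi; move: (hn i); rewrite hi /=; by case: (vote i).
have hcard : f < #|[set p in H | s3 p]|.
  move: hv0; rewrite /Defs.vote => hv0.
  have := leq_trans hv0 (cnt_split _).
  have -> : [set j in H | rec3 i0 j] = [set p in H | s3 p].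
    by apply/setP => p; rewrite !inE; case: (boolP (p \in H)) => //= hp; rewrite rec3_H.
  move: HH; lia.
have [i1 hi1] : exists i1, i1 \in [set p in H | s3 p].
  apply/set0Pn; rewrite -card_gt0; move: hcard; lia.
move: hi1; rewrite inE => /andP [hi1 s3i1].
set v := e i1.
have hall : forall i, i \in H -> cool_out F n t l c alpha toF dec H w A true i = Some v.
  move=> i hi; rewrite /cool_out /=.
  case: (boolP (s3 i)) => s3i; first by rewrite (main hi hi1).
  have hmaj : forall j, j \in H -> maj j = code v j.
    move=> j hj; apply: maj_ok => // p hp s3p.
    by rewrite (main hp hi1).
  have hz : forall j, j \in H -> z i j = code v j.
    move=> j hj; rewrite /Defs.z.
    case: (eqVneq j i) => [-> | hji]; first exact: hmaj.
    rewrite rec3_H //.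
    case: (boolP (s3 j)) => s3j.
      by rewrite m1_H //= (main hj hi1).
    rewrite /m4 hj s3j rec3_H // (negbTE s3i) /= eq_sym hji /=.
    exact: hmaj.
  have hH : n - t <= #|H| by have := cardH; move: HH; lia.
  have := Hdec (z i); case: (dec (z i)) => [x | ] hx; last first.
    have := hx v; rewrite ltnNge => /negP; case.
    apply: leq_trans hH _; apply: subset_leq_card; apply/subsetP => p hp.
    by rewrite inE hz // eqxx.
  congr Some.
  pose S := [set p | code x p == z i p] :&: H.
  apply: (mds Hkn Halpha_inj (S := S)).
    have := cardsUI [set p | code x p == z i p] H.
    have : #|[set p | code x p == z i p] :|: H| <= n.
      by apply: leq_trans (max_card _) _; rewrite card_ord.
    have := cardH; have := kbound; move: hx HH Hnt; rewrite /S /cool_k /=; set q := t %/ 5; set X := [set p | _]; clearbody q X; set a := #|X|; set b := #|X :|: H|; set d := #|X :&: H|; set h := #|H|; set ff := #|~: H|; clearbody a b d h ff; lia.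
  move=> p; rewrite !inE => /andP [/eqP -> hp].
  by rewrite hz.
by move=> i j hi hj; rewrite !hall.
Qed.

End Proto.


Unset Implicit Arguments.
Set Strict Implicit.

Theorem lemma2
  (n t l c : nat) (F : finFieldType)
  (alpha : nat -> F) (toF : {ffun 'I_c -> bool} -> F)
  (dec : ('I_n -> F) -> option {ffun 'I_(cool_k t) -> F})
  (Hnt : 3 * t + 1 <= n)
  (Hc : is_cool_c n t l c)
  (HF : #|F| = 2 ^ c)
  (Halpha_inj : {in [pred i | i < n] &, injective alpha})
  (Halpha_nz : forall i, i < n -> alpha i != 0%R)
  (HtoF : bijective toF)
  (Hdec : cool_dec_spec F n t alpha dec)
  (H : {set 'I_n}) (HH : #|~: H| <= t)
  (w : 'I_n -> l.-tuple bool) (A : adversary F n)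
  (d : bool)
  (HBA : forall b : bool,
      (forall i, i \in H -> vote F n t l c alpha toF H w A i = b) -> d = b) :
  (forall i j, i \in H -> j \in H ->
     cool_out F n t l c alpha toF dec H w A d i = cool_out F n t l c alpha toF dec H w A d j)
  /\
  (forall w0 : l.-tuple bool, (forall i, i \in H -> w i = w0) ->
     forall i, i \in H ->
       cool_out F n t l c alpha toF dec H w A d i = Some (cool_enc F t l c toF w0)).
Proof.
split.
- exact: (consistency Hnt Halpha_inj Hdec HH HBA).
- move=> w0 hw; exact: (validity dec Hnt HH HBA hw).
Qed.
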